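(* Suppose every IDR of the system $\mathcal{I}(E,\mathcal{F}(E))$ is of Restricted Case II form, and let $E'\subseteq E$. Then for any two entities $e_i,e_j\in E$, $$PS(e_i\mid E')\cup PS(e_j\mid E') = PS(\{e_i,e_j\}\mid E').$$
   Context: A system $\mathcal{I}(E,\mathcal{F}(E))$ consists of a finite set $E$ of entities, $n=|E|$, and a set $\mathcal{F}(E)$ of interdependency relations (IDRs). Each entity $e$ has at most one IDR, of the form $e\leftarrow \sum_{i=1}^{m}\prod_{x\in s_i}x$ (a disjunction of conjunctions), where each minterm $s_i$ is a nonempty subset of $E$; it means $e$ is operational only if for at least one minterm all entities of that minterm are operational. Entities without an IDR can only fail initially. Failure dynamics: given an initially failing set $E'\subseteq E$ and a set $H\subseteq E$ of hardened entities (hardened entities never fail), put $F_0=E'\setminus H$ and $F_{t+1}=F_t\cup\{e\in E\setminus H: e \text{ has an IDR and every minterm of it contains an element of } F_t\}$; the final failed set is $F(E',H):=F_{n-1}$. $\mathrm{KillSet}(E'):=F(E',\emptyset)$. Protection set: for $H\subseteq E$, $PS(H\mid E'):=\mathrm{KillSet}(E')\setminus F(E',H)$ (the entities prevented from failing by hardening $H$); for a single entity, $PS(e\mid E'):=PS(\{e\}\mid E')$. Restricted Case II: every IDR has the form $e_i\leftarrow \sum_{q=1}^{p} e_q$ with $e_q\in E$ (a disjunction of minterms of size one). *)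

(* Defs.v *)
From mathcomp Require Import all_boot.
Set Implicit Arguments. Unset Strict Implicit. Unset Printing Implicit Defensive.

(* An interdependency system over a finite entity type T (E = [set: T], n = #|T|).
   idr e = None       : e has no IDR;
   idr e = Some ms    : e <- sum_{s in ms} prod_{x in s} x  (ms = list of minterms). *)
Definition system (T : finType) := T -> option (seq {set T}).

Definition well_formed (T : finType) (I : system T) : Prop :=
  forall e ms, I e = Some ms -> forall s, s \in ms -> s != set0.

Definition restricted_case_II (T : finType) (I : system T) : Prop :=
  forall e ms, I e = Some ms -> forall s, s \in ms -> #|s| = 1.

Definition fail_step (T : finType) (I : system T) (H F : {set T}) : {set T} :=
  F :|: [set e | (e \notin H) &&
          (if I e is Some ms then all (fun s : {set T} => [exists x in s, x \in F]) ms
           else false)].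

Definition fail_iter (T : finType) (I : system T) (E' H : {set T}) (t : nat) : {set T} :=
  iter t (fail_step I H) (E' :\: H).

Definition final_failed (T : finType) (I : system T) (E' H : {set T}) : {set T} :=
  fail_iter I E' H (#|T|).-1.

Definition KillSet (T : finType) (I : system T) (E' : {set T}) : {set T} :=
  final_failed I E' set0.

Definition PS (T : finType) (I : system T) (H E' : {set T}) : {set T} :=
  KillSet I E' :\: final_failed I E' H.

(* Main.v *)
Require Import Defs.
From mathcomp Require Import all_boot.
Set Implicit Arguments. Unset Strict Implicit. Unset Printing Implicit Defensive.

Definition allc (T : finType) (I : system T) (F : {set T}) (e : T) : bool :=
  if I e is Some ms then all (fun s : {set T} => [exists x in s, x \in F]) ms
  else false.

Lemma step_eq (T : finType) (I : system T) (H F : {set T}) :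
  fail_step I H F = F :|: [set e | (e \notin H) && allc I F e].
Proof. by []. Qed.

Lemma allc_mono (T : finType) (I : system T) (F G : {set T}) (e : T) :
  F \subset G -> allc I F e -> allc I G e.
Proof.
move=> sFG; rewrite /allc; case: (I e) => // ms.
apply: sub_all => s /existsP [x /andP [xs xF]].
by apply/existsP; exists x; rewrite xs (subsetP sFG).
Qed.

Lemma allcI (T : finType) (I : system T) (F G : {set T}) (e : T) :
  restricted_case_II I -> allc I (F :&: G) e = allc I F e && allc I G e.
Proof.
move=> hII; rewrite /allc; case E: (I e) => [ms|] //.
have := hII _ _ E; elim: ms {E} => [|s ms IH] hs //=.
rewrite IH; last by move=> s' hs'; apply: hs; rewrite inE hs' orbT.
have /cards1P [y ->] : #|s| == 1 by rewrite hs // inE eqxx.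
have ex1 (P : pred T) : [exists x in [set y], P x] = P y.
  apply/existsP/idP => [[x /andP [/set1P -> //]]|Py].
  by exists y; rewrite set11.
rewrite !ex1 inE.
by case: (y \in F); case: (y \in G); case: (all _ ms); case: (all _ ms).
Qed.

Lemma iter_mono (T : finType) (I : system T) (E' H : {set T}) t :
  fail_iter I E' H t \subset fail_iter I E' H t.+1.
Proof. by rewrite /fail_iter /= step_eq subsetUl. Qed.

Lemma iter_mono0 (T : finType) (I : system T) (E' H : {set T}) t :
  E' :\: H \subset fail_iter I E' H t.
Proof.
elim: t => [|t IH]; first exact: subxx.
exact: subset_trans IH (iter_mono _ _ _ _).
Qed.

Lemma iterQ (T : finType) (I : system T) (E' H : {set T}) t (e : T) :
  e \in fail_iter I E' H t ->
  (e \in E' :\: H) || ((e \notin H) && allc I (fail_iter I E' H t) e).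
Proof.
elim: t => [|t IH] /=; first by move=> ->.
rewrite -/(fail_iter I E' H t) -/(fail_iter I E' H t.+1).
rewrite {1}/fail_iter /= step_eq -/(fail_iter I E' H t) in_setU inE.
case/orP => [/IH /orP [->//|/andP [eH ac]]|/andP [eH ac]]; apply/orP; right;
  rewrite eH /=; apply: allc_mono ac; exact: iter_mono.
Qed.

Lemma iterI (T : finType) (I : system T) (E' H1 H2 : {set T}) t :
  restricted_case_II I ->
  fail_iter I E' (H1 :|: H2) t = fail_iter I E' H1 t :&: fail_iter I E' H2 t.
Proof.
move=> hII; elim: t => [|t IH].
  by rewrite /fail_iter /= setDUr.
have -> : fail_iter I E' (H1 :|: H2) t.+1 =
  fail_step I (H1 :|: H2) (fail_iter I E' (H1 :|: H2) t) by [].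
have -> : fail_iter I E' H1 t.+1 = fail_step I H1 (fail_iter I E' H1 t) by [].
have -> : fail_iter I E' H2 t.+1 = fail_step I H2 (fail_iter I E' H2 t) by [].
rewrite !step_eq IH; apply/setP => e; rewrite !(inE, in_setU, in_setI).
apply/idP/idP.
  case/orP => [/andP [-> ->] //|/andP [eH]]; rewrite allcI // => /andP [a1 a2].
  move: eH;  rewrite negb_or => /andP [-> ->].
  by rewrite a1 a2 !orbT.
have side (H : {set T}) :
  (e \in fail_iter I E' H t) || ((e \notin H) && allc I (fail_iter I E' H t) e) ->
  (e \in E' :\: H) || ((e \notin H) && allc I (fail_iter I E' H t) e).
  case/orP => [/iterQ //|->]; by rewrite orbT.
move=> /andP [/side h1 /side h2].
case/orP: h1 => [e1|/andP [n1 a1]]; case/orP: h2 => [e2|/andP [n2 a2]].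
- apply/orP; left; rewrite -in_setI -IH; apply: (subsetP (iter_mono0 _ _ _ _)).
  by move: e1 e2; rewrite !inE negb_or => /andP [-> ->] /andP [-> _].
- apply/orP; left; rewrite -in_setI -IH; apply: (subsetP (iter_mono0 _ _ _ _)).
  by move: e1; rewrite !inE negb_or n2 => /andP [-> ->].
- apply/orP; left; rewrite -in_setI -IH; apply: (subsetP (iter_mono0 _ _ _ _)).
  by move: e2; rewrite !inE negb_or n1 => /andP [-> ->].
- apply/orP; right; rewrite negb_or n1 n2 /=.
  by rewrite allcI // a1 a2.
Qed.

Theorem theorem4 (T : finType) (I : system T) (E' : {set T}) (ei ej : T) :
  well_formed I -> restricted_case_II I ->
  PS I [set ei] E' :|: PS I [set ej] E' = PS I [set ei; ej] E'.
Proof.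
move=> _ hII; rewrite /PS /final_failed.
by rewrite iterI // setDIr.
Qed.
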